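(* Let $\alpha_1,\dots,\alpha_K\in\mathbb R^d\setminus\{0\}$. (1) For every $\eta\in\mathbb R^d\setminus\{0\}$ there is a (possibly empty) subset $\{\alpha_{k_1},\dots,\alpha_{k_m}\}\subseteq\{\alpha_1,\dots,\alpha_K\}$ with $\mathcal H_\eta=\mathrm{span}\{\alpha_{k_1},\dots,\alpha_{k_m}\}$ (with $\mathcal H_\eta=\{0\}$ if empty) such that (i) $P_{\mathcal H_\eta}\eta=\sum_{p=1}^m\gamma_{k_p}\alpha_{k_p}$ for some $\gamma_{k_1},\dots,\gamma_{k_m}\ge0$; (ii) $\alpha_k^{T}P_{\mathcal H_\eta^\perp}\eta<0$ for every $k\notin\{k_1,\dots,k_m\}$; (iii) $P_{\mathcal H_\eta^\perp}\eta$ is uniquely determined by $\eta$ (independent of the choice of such a subset) and depends continuously on $\eta$; it is called the canonical projection of $\eta$ with respect to $\{\alpha_1,\dots,\alpha_K\}$. (2) Let $\omega_1,\dots,\omega_K>0$ and $\eta_n\in\mathbb R^d$ with $\eta_n/n\to\eta\ne0$. Let $f_n(\theta)=-\sum_{k=1}^K\omega_k\exp(\alpha_k^{T}\theta)+\eta_n^{T}\theta-\tfrac12\theta^{T}\theta$ with unique maximizer $\theta_n$. Then $\theta_n/n\to P_{\mathcal H_\eta^\perp}\eta$ and $f_n(\theta_n)/n^2\to\tfrac12\|P_{\mathcal H_\eta^\perp}\eta\|^2$.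
   Context: $P_{\mathcal H}$ denotes orthogonal projection onto a subspace $\mathcal H$ of $\mathbb R^d$ and $\mathcal H^\perp$ its orthogonal complement. *)

(* Defs.v *)
(* MathComp + MathComp-Analysis, over an abstract R : realType.
   Vectors of R^d are row vectors 'rV[R]_d; a subspace H of R^d is
   represented as the row space of a matrix. *)
From HB Require Import structures.
From mathcomp Require Import all_boot all_order all_algebra.
From mathcomp Require Import all_classical all_reals all_analysis.
Set Implicit Arguments. Unset Strict Implicit. Unset Printing Implicit Defensive.
Import Order.TTheory GRing.Theory Num.Theory.
Import numFieldNormedType.Exports.
Local Open Scope ring_scope.

Definition dotv (R : realType) (d : nat) (u v : 'rV[R]_d) : R :=
  \sum_(i < d) u 0 i * v 0 i.

(* Orthogonal projection P_H onto H = row space of A.  With B := row_base A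
   (a basis of H as rows, full row rank), P_H v = v B^T (B B^T)^{-1} B.
   If H = {0}, B is empty and P_H v = 0. *)
Definition orthproj (R : realType) (m d : nat) (A : 'M[R]_(m, d))
    (v : 'rV[R]_d) : 'rV[R]_d :=
  let B := row_base A in v *m B^T *m invmx (B *m B^T) *m B.

(* H_S = span {alpha_k | k in S}: row space of the matrix whose k-th row is
   alpha_k if k \in S and 0 otherwise. *)
Definition spanmx (R : realType) (d K : nat) (alpha : 'I_K -> 'rV[R]_d)
    (S : {set 'I_K}) : 'M[R]_(K, d) :=
  \matrix_(k < K, j < d) (if k \in S then alpha k 0 j else 0).

(* H_S^perp = { u | u alpha_k^T = 0 for all k in S } = row space of kermx A^T. *)
Definition perpmx (R : realType) (d K : nat) (alpha : 'I_K -> 'rV[R]_d)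
    (S : {set 'I_K}) : 'M[R]_d :=
  kermx (spanmx alpha S)^T.

Definition perpproj (R : realType) (d K : nat) (alpha : 'I_K -> 'rV[R]_d)
    (S : {set 'I_K}) (eta : 'rV[R]_d) : 'rV[R]_d :=
  orthproj (perpmx alpha S) eta.

Definition admissible (R : realType) (d K : nat) (alpha : 'I_K -> 'rV[R]_d)
    (eta : 'rV[R]_d) (S : {set 'I_K}) : Prop :=
  (exists gamma : 'I_K -> R,
      (forall k, k \in S -> 0 <= gamma k) /\
      orthproj (spanmx alpha S) eta = \sum_(k in S) gamma k *: alpha k)
  /\ (forall k, k \notin S -> dotv (alpha k) (perpproj alpha S eta) < 0).

Definition fobj (R : realType) (d K : nat) (alpha : 'I_K -> 'rV[R]_d)
    (omega : 'I_K -> R) (etan : 'rV[R]_d) (theta : 'rV[R]_d) : R :=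
  - (\sum_(k < K) omega k * expR (dotv (alpha k) theta))
  + dotv etan theta - 2^-1 * dotv theta theta.

(* Main.v *)
Require Import Defs.
From HB Require Import structures.
From mathcomp Require Import all_boot all_order all_algebra.
From mathcomp Require Import all_classical all_reals all_analysis.
From mathcomp Require Import ring lra.
Import Order.TTheory GRing.Theory Num.Theory.
Import numFieldNormedType.Exports.
Local Open Scope ring_scope.
Set Implicit Arguments. Unset Strict Implicit.

Section Dot.
Variables (R : realType) (d : nat).
Implicit Types u v w : 'rV[R]_d.

Lemma dotvC u v : dotv u v = dotv v u.
Proof. by apply: eq_bigr => i _; rewrite mulrC. Qed.
Lemma dotvDl u v w : dotv (u + v) w = dotv u w + dotv v w.
Proof. by rewrite /dotv -big_split; apply: eq_bigr => i _; rewrite !mxE mulrDl. Qed.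
Lemma dotvDr u v w : dotv w (u + v) = dotv w u + dotv w v.
Proof. by rewrite dotvC dotvDl !(dotvC w). Qed.
Lemma dotvZl a u v : dotv (a *: u) v = a * dotv u v.
Proof. by rewrite /dotv mulr_sumr; apply: eq_bigr => i _; rewrite !mxE mulrA. Qed.
Lemma dotvZr a u v : dotv v (a *: u) = a * dotv v u.
Proof. by rewrite dotvC dotvZl dotvC. Qed.
Lemma dotvNl u v : dotv (- u) v = - dotv u v.
Proof. by rewrite -scaleN1r dotvZl mulN1r. Qed.
Lemma dotvNr u v : dotv v (- u) = - dotv v u.
Proof. by rewrite dotvC dotvNl dotvC. Qed.
Lemma dotvBl u v w : dotv (u - v) w = dotv u w - dotv v w.
Proof. by rewrite dotvDl dotvNl. Qed.
Lemma dotvBr u v w : dotv w (u - v) = dotv w u - dotv w v.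
Proof. by rewrite dotvDr dotvNr. Qed.
Lemma dotv0l v : dotv 0 v = 0.
Proof. by rewrite /dotv big1 // => i _; rewrite mxE mul0r. Qed.
Lemma dotv0r v : dotv v 0 = 0.
Proof. by rewrite dotvC dotv0l. Qed.
Lemma dotv_suml (I : finType) (P : pred I) (F : I -> 'rV[R]_d) v :
  dotv (\sum_(i | P i) F i) v = \sum_(i | P i) dotv (F i) v.
Proof.
elim/big_rec2: _ => [|i x y _ <-]; first by rewrite dotv0l.
by rewrite dotvDl.
Qed.
Lemma dotvv_ge0 v : 0 <= dotv v v.
Proof. by apply: sumr_ge0 => i _; rewrite -expr2 sqr_ge0. Qed.
Lemma dotvv_eq0 v : dotv v v = 0 -> v = 0.
Proof.
move=> /eqP; rewrite psumr_eq0 => [/allP H|i _]; last by rewrite -expr2 sqr_ge0.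
apply/rowP => i; rewrite mxE.
have /H : i \in index_enum 'I_d by rewrite mem_index_enum.
by rewrite /= mulf_eq0 orbb => /eqP.
Qed.
Lemma dotvE u v : dotv u v = (u *m v^T) 0 0.
Proof. by rewrite !mxE; apply: eq_bigr => i _; rewrite !mxE. Qed.

End Dot.
Lemma entry_le_norm (R : realType) d (v : 'rV[R]_d) i : `|v 0 i| <= `|v|.
Proof.
have -> : `|v| = mx_norm v by [].
rewrite mx_normrE.
rewrite (bigD1 (0, i)) //=.
by rewrite le_max lexx.
Qed.
Lemma norm_le_entry (R : realType) d (v : 'rV[R]_d) : v = 0 \/ exists i, `|v| = `|v 0 i|.
Proof.
have -> : `|v| = mx_norm v by [].
have [H0|/mx_norm_neq0 [[a b] ->]] := eqVneq (mx_norm v) 0; first by left; exact: mx_norm_eq0.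
by right; exists b; rewrite /= (ord1 a).
Qed.
Section LA.
Variables (R : realType) (d : nat).

Lemma orth_sub0 m (A : 'M[R]_(m, d)) (w : 'rV_d) :
  (w <= A)%MS -> w *m A^T = 0 -> w = 0.
Proof.
move=> /submxP [D ->] H; apply: dotvv_eq0.
by rewrite dotvE trmx_mul mulmxA H mul0mx mxE.
Qed.
Lemma BBT_unit m (B : 'M[R]_(m, d)) : row_free B -> B *m B^T \in unitmx.
Proof.
move=> fB; rewrite -row_free_unit; apply: inj_row_free => v Hv.
have: v *m B = 0.
  apply: (@orth_sub0 _ B); first exact: submxMl.
  by rewrite -mulmxA.
by move=> /eqP; rewrite -(mul0mx _ B) => /eqP /(row_free_inj fB).
Qed.

Lemma orthproj_sub m (A : 'M[R]_(m, d)) v : (orthproj A v <= A)%MS.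
Proof. by rewrite /orthproj; apply: submx_trans (submxMl _ _) _; rewrite eq_row_base. Qed.

Lemma orthproj_orth m (A : 'M[R]_(m, d)) v : (v - orthproj A v) *m A^T = 0.
Proof.
have /submxP [D HD] : (A <= row_base A)%MS by rewrite eq_row_base.
rewrite [in A^T]HD trmx_mul mulmxA; suff -> : (v - orthproj A v) *m (row_base A)^T = 0 by rewrite mul0mx.
rewrite /orthproj /=; have := @BBT_unit _ _ (row_base_free A).
move: (row_base A) => B HB.
by rewrite mulmxBl -!mulmxA mulVmx ?mulmx1 ?subrr.
Qed.

Lemma orthproj_uniq m (A : 'M[R]_(m, d)) v h :
  (h <= A)%MS -> (v - h) *m A^T = 0 -> orthproj A v = h.
Proof.
move=> hA H; apply/eqP; rewrite -subr_eq0; apply/eqP/(@orth_sub0 _ A).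
  by rewrite addmx_sub ?eqmx_opp ?orthproj_sub.
have -> : orthproj A v - h = (v - h) - (v - orthproj A v) by rewrite opprB (addrC (v - h)) addrA subrK.
by rewrite mulmxBl H orthproj_orth subrr.
Qed.
End LA.
Section SP.
Variables (R : realType) (d K : nat) (alpha : 'I_K -> 'rV[R]_d).
Lemma spanmx_entry (S : {set 'I_K}) (u : 'rV[R]_d) k :
  (u *m (spanmx alpha S)^T) 0 k = if k \in S then dotv (alpha k) u else 0.
Proof.
rewrite !mxE; case: ifP => kS.
  by apply: eq_bigr => j _; rewrite !mxE kS mulrC.
by rewrite big1 // => j _; rewrite !mxE kS mulr0.
Qed.

Lemma spanmx_orth (S : {set 'I_K}) (u : 'rV[R]_d) :
  (forall k, k \in S -> dotv (alpha k) u = 0) -> u *m (spanmx alpha S)^T = 0.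
Proof.
move=> H; apply/rowP => k; rewrite spanmx_entry mxE.
by case: ifP => // /H.
Qed.

Lemma spanmx_orth_inv (S : {set 'I_K}) (u : 'rV[R]_d) :
  u *m (spanmx alpha S)^T = 0 -> forall k, k \in S -> dotv (alpha k) u = 0.
Proof.
move=> H k kS; have := congr1 (fun M : 'M[R]_(1,K) => M 0 k) H.
by rewrite spanmx_entry kS mxE.
Qed.

Lemma spanmx_comb (S : {set 'I_K}) (y : 'I_K -> R) :
  \sum_(k in S) y k *: alpha k = (\row_k y k) *m spanmx alpha S.
Proof.
apply/rowP => j; rewrite !mxE summxE big_mkcond /=.
by apply: eq_bigr => k _; rewrite !mxE; case: ifP; rewrite ?mulr0.
Qed.

Lemma spanmx_sub (S : {set 'I_K}) (h : 'rV[R]_d) :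
  (h <= spanmx alpha S)%MS -> exists y, h = \sum_(k in S) y k *: alpha k.
Proof.
move=> /submxP [D ->]; exists (fun k => D 0 k); rewrite spanmx_comb.
by congr (_ *m _); apply/rowP => k; rewrite mxE.
Qed.

Lemma perpproj_dec (S : {set 'I_K}) (eta : 'rV[R]_d) :
  perpproj alpha S eta = eta - orthproj (spanmx alpha S) eta.
Proof.
rewrite /perpproj /perpmx; apply: orthproj_uniq.
  by apply/sub_kermxP; apply: orthproj_orth.
have /submxP [D ->] := orthproj_sub (spanmx alpha S) eta.
rewrite opprB addrC subrK -mulmxA.
set M := spanmx alpha S.
by rewrite -{1}(trmxK M) -trmx_mul mulmx_ker trmx0 mulmx0.
Qed.

Lemma char_proj (S : {set 'I_K}) (eta c th : 'rV[R]_d) (y : 'I_K -> R) :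
  eta = c + th -> c = \sum_(k in S) y k *: alpha k ->
  (forall k, k \in S -> dotv (alpha k) th = 0) ->
  orthproj (spanmx alpha S) eta = c /\ perpproj alpha S eta = th.
Proof.
move=> Heta Hc Hth.
have E : orthproj (spanmx alpha S) eta = c.
  apply: orthproj_uniq; first by rewrite Hc spanmx_comb submxMl.
  by rewrite Heta (addrC c th) addrK; apply: spanmx_orth.
by split => //; rewrite perpproj_dec E Heta (addrC c th) addrK.
Qed.

Lemma perpproj_orth (S : {set 'I_K}) eta k : k \in S -> dotv (alpha k) (perpproj alpha S eta) = 0.
Proof. by apply: spanmx_orth_inv; rewrite perpproj_dec orthproj_orth. Qed.
End SP.
Section Adm.
Variables (R : realType) (d K : nat).
Implicit Types (alpha : 'I_K -> 'rV[R]_d) (eta phi : 'rV[R]_d) (S T : {set 'I_K}) (g : 'I_K -> R).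

Definition thof alpha eta S g := eta - \sum_(k in S) g k *: alpha k.

Definition adm2 alpha T eta S g : Prop :=
  [/\ S \subset T, (forall k, k \in S -> 0 <= g k),
      (forall k, k \in S -> dotv (alpha k) (thof alpha eta S g) = 0) &
      (forall k, k \in T -> k \notin S -> dotv (alpha k) (thof alpha eta S g) < 0)].

Lemma adm2_polar alpha T eta S g : adm2 alpha T eta S g ->
  forall k, k \in T -> dotv (alpha k) (thof alpha eta S g) <= 0.
Proof.
case=> _ _ H0 H1 k kT; have [kS|kS] := boolP (k \in S).
  by rewrite H0.
by apply/ltW/H1.
Qed.

Lemma adm2_VI alpha T eta S g : adm2 alpha T eta S g ->
  forall phi, (forall k, k \in T -> dotv (alpha k) phi <= 0) ->
  dotv (eta - thof alpha eta S g) (phi - thof alpha eta S g) <= 0.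
Proof.
move=> [sST g0 H0 _] phi Hphi.
have -> : eta - thof alpha eta S g = \sum_(k in S) g k *: alpha k.
  by rewrite /thof opprB addrC subrK.
rewrite dotv_suml; apply: sumr_le0 => k kS.
rewrite dotvZl dotvBr H0 // subr0; apply: mulr_ge0_le0; first exact: g0.
exact: (Hphi _ (fintype.subsetP sST _ kS)).
Qed.

Lemma adm2_uniq alpha T eta S g S' g' :
  adm2 alpha T eta S g -> adm2 alpha T eta S' g' ->
  thof alpha eta S g = thof alpha eta S' g'.
Proof.
move=> A1 A2; set th := thof alpha eta S g; set th' := thof alpha eta S' g'.
have h1 := adm2_VI A1 (adm2_polar A2).
have h2 := adm2_VI A2 (adm2_polar A1).
rewrite -/th -/th' in h1 h2.
apply/eqP; rewrite -subr_eq0; apply/eqP/dotvv_eq0/le_anti.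
rewrite dotvv_ge0 andbT.
have -> : dotv (th - th') (th - th') =
   dotv (eta - th) (th' - th) + dotv (eta - th') (th - th').
  rewrite !(dotvBl, dotvBr) ?(dotvC th th') ?(dotvC th eta) ?(dotvC th' eta).
  ring.
by rewrite -(addr0 0) lerD.
Qed.


Lemma dotv_comb0 alpha S g x :
  (forall k, k \in S -> dotv (alpha k) x = 0) ->
  dotv (\sum_(k in S) g k *: alpha k) x = 0.
Proof.
move=> H; rewrite dotv_suml big1 // => k kS; by rewrite dotvZl H // mulr0.
Qed.

Lemma eta_thof alpha eta S g : eta - thof alpha eta S g = \sum_(k in S) g k *: alpha k.
Proof. by rewrite /thof opprB addrC subrK. Qed.

Lemma adm2_empty alpha eta : exists S g, adm2 alpha finset.set0 eta S g.
Proof.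
exists finset.set0, (fun _ => 0); split; first exact: finset.sub0set.
- by move=> k; rewrite finset.in_set0.
- by move=> k; rewrite finset.in_set0.
- by move=> k; rewrite finset.in_set0.
Qed.

Lemma proj_orth (a x : 'rV[R]_d) : dotv a a != 0 ->
  dotv a (x - (dotv a x / dotv a a) *: a) = 0.
Proof. by move=> H; rewrite dotvBr dotvZr mulfVK // subrr. Qed.

Lemma adm2_exists n alpha T eta : (#|T| <= n)%N -> exists S g, adm2 alpha T eta S g.
Proof.
elim: n alpha T eta => [|n IH] alpha T eta HT.
  move: HT; rewrite leqn0 cards_eq0 => /eqP E; rewrite E; exact: adm2_empty.
have [E|[j jT]] := finset.set_0Vmem T; first by rewrite E; exact: adm2_empty.
set T' := T :\ j.
have HT' : (#|T'| <= n)%N by move: HT; rewrite (cardsD1 j T) jT.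
have jT' : j \notin T' by rewrite setD11.
have sT'T : T' \subset T by exact: subsetDl.
have inT' k : k \in T -> k != j -> k \in T' by move=> kT kj; rewrite in_setD1 kj kT.
have [S0 [g0 A0]] := IH alpha T' eta HT'.
have [sS0 g0p A0o A0s] := A0.
have jS0 : j \notin S0 by apply: contra jT'; apply: (fintype.subsetP sS0).
set th0 := thof alpha eta S0 g0.
have [Ha|Ha|Ha] := ltrgtP (dotv (alpha j) th0) 0.
-
  exists S0, g0; split => //.
    exact: fintype.subset_trans sS0 sT'T.
  move=> k kT kS; have [->//|kj] := eqVneq k j.
  by apply: A0s => //; apply: inT'.
-
  set nj := dotv (alpha j) (alpha j).
  have nj0 : nj != 0.
    apply/eqP => /dotvv_eq0 aj0; move: Ha; rewrite aj0 dotv0l ltxx //.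
  set s := fun k => dotv (alpha j) (alpha k) / nj.
  set beta := fun k => alpha k - s k *: alpha j.
  set t := dotv (alpha j) eta / nj.
  set eta' := eta - t *: alpha j.
  have betaj k : dotv (alpha j) (beta k) = 0 by apply: proj_orth.
  have etaj : dotv (alpha j) eta' = 0 by apply: proj_orth.
  have alphaE k : alpha k = beta k + s k *: alpha j by rewrite /beta subrK.
  have [S' [g' A']] := IH beta T' eta' HT'.
  have [sS' g'p A'o A's] := A'.
  have jS' : j \notin S' by apply: contra jT'; apply: (fintype.subsetP sS').
  set th' := thof beta eta' S' g'.
  have orthj : dotv (alpha j) th' = 0.
    rewrite /th' /thof dotvBr etaj dotvC dotv_comb0 ?subr0 // => k _.
    by rewrite dotvC betaj.
  have dot_ab k : dotv (alpha k) th' = dotv (beta k) th'.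
    by rewrite {1}alphaE dotvDl dotvZl orthj mulr0 addr0.
  set mu := t - \sum_(k in S') g' k * s k.
  set g := fun k => if k == j then mu else g' k.
  have gS' : \sum_(k in S') g k *: alpha k = \sum_(k in S') g' k *: alpha k.
    apply: eq_bigr => k kS; rewrite /g ifN //.
    by apply: contraNneq jS' => e; rewrite -e.
  have HS : \sum_(k in S') g' k *: beta k =
      \sum_(k in S') g' k *: alpha k - (\sum_(k in S') g' k * s k) *: alpha j.
    rewrite scaler_suml -sumrB; apply: eq_bigr => k _.
    by rewrite /beta scalerBr scalerA.
  have Eth : thof alpha eta (j |: S') g = th'.
    rewrite /thof /th' /thof big_setU1 //= gS' HS /g eqxx /eta' /mu scalerBl.
    apply/rowP => i; rewrite !mxE; ring.
  have orthS k : k \in j |: S' -> dotv (alpha k) th' = 0.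
    rewrite in_setU1 => /orP [/eqP ->|kS]; first exact: orthj.
    by rewrite dot_ab; apply: A'o.
  have mu0 : 0 <= mu.
    have polar' k : k \in T' -> dotv (alpha k) th' <= 0.
      by move=> kT; rewrite dot_ab; apply: (adm2_polar A').
    have VI := adm2_VI A0 polar'.
    rewrite -/th0 in VI.
    have Ec : eta - th' = mu *: alpha j + \sum_(k in S') g' k *: alpha k.
      by rewrite -Eth eta_thof big_setU1 //= gS' /g eqxx.
    have c_th' : dotv (eta - th') th' = 0.
      by rewrite -Eth eta_thof Eth; apply: dotv_comb0.
    have c_th0 : dotv (eta - th') th0 <= mu * dotv (alpha j) th0.
      rewrite Ec dotvDl dotvZl gerDl dotv_suml; apply: sumr_le0 => k kS.
      rewrite dotvZl; apply: mulr_ge0_le0; first exact: g'p.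
      by apply: (adm2_polar A0); apply: (fintype.subsetP sS').
    have key : 0 <= dotv (eta - th') (th0 - th').
      have -> : dotv (eta - th') (th0 - th') =
          - dotv (eta - th0) (th' - th0) + dotv (th0 - th') (th0 - th').
        rewrite !(dotvBl, dotvBr) ?(dotvC th0 th') ?(dotvC th0 eta) ?(dotvC th' eta).
        ring.
      by apply: addr_ge0; [rewrite oppr_ge0 | exact: dotvv_ge0].
    rewrite -(pmulr_lge0 _ Ha); apply: le_trans key _.
    by rewrite dotvBr c_th' subr0.
  exists (j |: S'), g; split.
  + by rewrite finset.subUset finset.sub1set jT (fintype.subset_trans sS' sT'T).
  + move=> k; rewrite in_setU1 /g; case: eqP => [_ _|kj /= kS] //.
    exact: g'p.
  + by move=> k kS; rewrite Eth; apply: orthS.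
  + move=> k kT; rewrite Eth in_setU1 negb_or => /andP [kj kS].
    by rewrite dot_ab; apply: A's => //; apply: inT'.
-
  exists (j |: S0), (fun k => if k == j then 0 else g0 k).
  have Eth : thof alpha eta (j |: S0) (fun k => if k == j then 0 else g0 k) = th0.
    rewrite /thof big_setU1 //= eqxx scale0r add0r; congr (_ - _).
    apply: eq_bigr => k kS0; rewrite ifN //.
    by apply: contraNneq jS0 => e; rewrite -e.
  split.
  + by rewrite finset.subUset finset.sub1set jT (fintype.subset_trans sS0 sT'T).
  + move=> k; rewrite in_setU1; case: eqP => [_ _|kj /= kS]; first exact: lexx.
    exact: g0p.
  + move=> k; rewrite Eth in_setU1; case/orP => [/eqP ->|]; first exact: Ha.
    exact: A0o.
  + move=> k kT; rewrite Eth in_setU1 negb_or => /andP [kj kS].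
    by apply: A0s => //; apply: inT'.
Qed.
End Adm.
Section Norms.
Variables (R : realType) (d : nat).
Implicit Types u v : 'rV[R]_d.

Lemma dotv_le_norm v : dotv v v <= d%:R * `|v| ^+ 2.
Proof.
have -> : d%:R * `|v| ^+ 2 = \sum_(i < d) `|v| ^+ 2.
  by rewrite sumr_const card_ord mulr_natl.
rewrite /dotv; apply: ler_sum => i _.
rewrite -expr2 -real_normK ?num_real //; apply: lerXn2r; rewrite ?nnegrE //.
exact: entry_le_norm.
Qed.

Lemma norm_le_dotv v : `|v| ^+ 2 <= dotv v v.
Proof.
have [->|[i ->]] := norm_le_entry v; first by rewrite normr0 expr0n /= dotvv_ge0.
rewrite /dotv (bigD1 i) //= real_normK ?num_real // lerDl.
by apply: sumr_ge0 => j _; rewrite -expr2 sqr_ge0.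
Qed.

Lemma dotv_abs u v : `|dotv u v| <= d%:R * (`|u| * `|v|).
Proof.
have -> : d%:R * (`|u| * `|v|) = \sum_(i < d) (`|u| * `|v|).
  by rewrite sumr_const card_ord mulr_natl.
rewrite /dotv; apply: le_trans (ler_norm_sum _ _ _) _.
apply: ler_sum => i _.
by rewrite normrM ler_pM ?entry_le_norm.
Qed.
End Norms.

Lemma expbound (R : realType) (w a M x : R) : 0 < w -> 0 <= a -> 0 <= M ->
  6 * a <= w * M ^+ 2 -> - (w * expR x) + a * x <= a * M.
Proof.
move=> w0 a0 M0 H.
have [xM|Mx] := leP x M.
  have := expR_ge0 x; nra.
have x0 : 0 < x by apply: le_lt_trans Mx.
have := expR_ge1Dxn 2 (ltW x0); rewrite /= !factS fact0 /= => E.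
have E' : x ^+ 3 / 6 <= expR x by apply: le_trans E; rewrite lerDr.
have : w * (x ^+ 3 / 6) <= w * expR x by rewrite ler_pM2l.
rewrite !exprS expr0 mulr1 in H E' * => Hw.
have h1 : 6 * a * x <= w * (M * M) * x by rewrite ler_wpM2r // ltW.
have h3 : M * M <= x * x by nra.
have h4 : w * (M * M) * x <= w * (x * x) * x.
  apply: ler_wpM2r; first exact: ltW.
  by apply: ler_wpM2l => //; exact: ltW.
have h5 : 0 <= a * M by apply: mulr_ge0.
have h6 : w * (x * (x * x) / 6) = w * (x * x) * x / 6 by rewrite !mulrA.
lra.
Qed.

Section Fobj.
Variables (R : realType) (d K : nat) (alpha : 'I_K -> 'rV[R]_d).

Definition gtil (S : {set 'I_K}) (g : 'I_K -> R) k := if k \in S then g k else 0.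

Lemma fobj_lower (omega : 'I_K -> R) eta S g (N : R) e :
  adm2 alpha [set: 'I_K] eta S g -> (forall k, 0 <= omega k) -> 0 <= N ->
  - \sum_k omega k + N ^+ 2 / 2 * dotv (thof alpha eta S g) (thof alpha eta S g)
    + N ^+ 2 * dotv (e - eta) (thof alpha eta S g)
  <= fobj alpha omega (N *: e) (N *: thof alpha eta S g).
Proof.
move=> A om0 N0; have [_ g0 Ao _] := A.
set ts := thof alpha eta S g.
have Hts : dotv eta ts = dotv ts ts.
  by rewrite -(subrK ts eta) dotvDl eta_thof dotv_comb0 ?add0r.
have Hexp : \sum_k omega k * expR (dotv (alpha k) (N *: ts)) <= \sum_k omega k.
  apply: ler_sum => k _; rewrite -{2}(mulr1 (omega k)); apply: ler_wpM2l => //.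
  rewrite expR_le1 dotvZr; apply: mulr_ge0_le0 => //.
  by apply: (adm2_polar A); rewrite finset.in_setT.
rewrite /fobj !(dotvZl, dotvZr) (dotvBl e eta ts) Hts.
set X := \sum_k _ in Hexp *.
set a := dotv e ts in Hts *; set b := dotv ts ts in Hts *.
have : N ^+ 2 = N * N by rewrite expr2.
lra.
Qed.

Lemma comb_gtil (S : {set 'I_K}) g (x : 'rV[R]_d) :
  dotv (\sum_(k in S) g k *: alpha k) x = \sum_k gtil S g k * dotv (alpha k) x.
Proof.
rewrite dotv_suml big_mkcond /=; apply: eq_bigr => k _.
by rewrite /gtil; case: ifP; rewrite ?dotvZl ?mul0r.
Qed.

Lemma fobj_upper (omega : 'I_K -> R) eta S g (N M : R) e th :
  adm2 alpha [set: 'I_K] eta S g -> (forall k, 0 < omega k) -> 0 <= N -> 0 <= M ->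
  (forall k, 6 * (N * gtil S g k) <= omega k * M ^+ 2) ->
  fobj alpha omega (N *: e) th <=
    N * M * (\sum_k gtil S g k)
    - 4^-1 * dotv (th - N *: thof alpha eta S g) (th - N *: thof alpha eta S g)
    + N ^+ 2 / 2 * dotv (thof alpha eta S g) (thof alpha eta S g)
    + N ^+ 2 * dotv (e - eta) (e - eta)
    + N ^+ 2 * dotv (e - eta) (thof alpha eta S g).
Proof.
move=> A om0 N0 M0 HM; have [_ g0 Ao _] := A.
set ts := thof alpha eta S g.
have gt0 k : 0 <= gtil S g k by rewrite /gtil; case: ifP => // /g0.
have Hc : dotv (eta - ts) th = \sum_k gtil S g k * dotv (alpha k) th.
  by rewrite eta_thof comb_gtil.
have Hexp : \sum_k (- (omega k * expR (dotv (alpha k) th)) + N * gtil S g k * dotv (alpha k) th)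
    <= \sum_k N * gtil S g k * M.
  apply: ler_sum => k _; apply: expbound => //.
  by apply: mulr_ge0.
rewrite big_split /= sumrN in Hexp.
have E1 : \sum_(i < K) N * gtil S g i * dotv (alpha i) th = N * dotv (eta - ts) th.
  by rewrite Hc mulr_sumr; apply: eq_bigr => k _; rewrite mulrA.
have E2 : \sum_(i < K) N * gtil S g i * M = N * M * \sum_k gtil S g k.
  by rewrite mulr_sumr; apply: eq_bigr => k _; rewrite mulrAC.
rewrite E1 E2 in Hexp.
clearbody ts.
have H0 := dotvv_ge0 (2^-1 *: (th - N *: ts) - N *: (e - eta)).
rewrite /fobj.
move: Hexp H0.
rewrite !(dotvDl, dotvDr, dotvBl, dotvBr, dotvZl, dotvZr, dotvNl, dotvNr).
rewrite ?(dotvC eta e) ?(dotvC ts e) ?(dotvC th e) ?(dotvC ts eta) ?(dotvC th eta) ?(dotvC th ts).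
set X := \sum_k _.
have : N ^+ 2 = N * N by rewrite expr2.
nra.
Qed.
End Fobj.
Section CP.
Variables (R : realType) (d K : nat) (alpha : 'I_K -> 'rV[R]_d).

Lemma cp_ex eta : exists p : {set 'I_K} * ('I_K -> R), adm2 alpha [set: 'I_K] eta p.1 p.2.
Proof.
have [S [g A]] := @adm2_exists R d K #|[set: 'I_K]| alpha [set: 'I_K] eta (leqnn _).
by exists (S, g).
Qed.

Definition cpp eta := projT1 (cid (cp_ex eta)).
Lemma cpp_adm eta : adm2 alpha [set: 'I_K] eta (cpp eta).1 (cpp eta).2.
Proof. exact: (projT2 (cid (cp_ex eta))). Qed.
Definition cpf eta := thof alpha eta (cpp eta).1 (cpp eta).2.

Lemma adm2_admissible eta S g : adm2 alpha [set: 'I_K] eta S g -> admissible alpha eta S.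
Proof.
move=> A; have [_ g0 Ao As] := A.
have E : eta = \sum_(k in S) g k *: alpha k + thof alpha eta S g.
  by rewrite /thof addrC subrK.
have [Ho Hp] := char_proj E erefl Ao.
split; first by exists g; split.
by move=> k kS; rewrite Hp; apply: As => //; rewrite finset.in_setT.
Qed.

Lemma admissible_adm2 eta S : admissible alpha eta S ->
  exists g, adm2 alpha [set: 'I_K] eta S g /\ perpproj alpha S eta = thof alpha eta S g.
Proof.
move=> [[g [g0 Hg]] Hs].
have E : perpproj alpha S eta = thof alpha eta S g by rewrite perpproj_dec Hg.
exists g; split => //; split.
- exact: finset.subsetT.
- exact: g0.
- by move=> k kS; rewrite -E; apply: perpproj_orth.
- by move=> k _ kS; rewrite -E; apply: Hs.
Qed.

Lemma cpf_uniq eta S : admissible alpha eta S -> perpproj alpha S eta = cpf eta.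
Proof.
move=> /admissible_adm2 [g [A ->]]; exact: adm2_uniq A (cpp_adm eta).
Qed.

Lemma cpf_polar eta k : dotv (alpha k) (cpf eta) <= 0.
Proof. by apply: (adm2_polar (cpp_adm eta)); rewrite finset.in_setT. Qed.

Lemma cpf_nonexp x y :
  dotv (cpf x - cpf y) (cpf x - cpf y) <= dotv (x - y) (x - y).
Proof.
have h1 := adm2_VI (cpp_adm x) (fun k _ => cpf_polar y k).
have h2 := adm2_VI (cpp_adm y) (fun k _ => cpf_polar x k).
rewrite -/(cpf x) -/(cpf y) in h1 h2.
have h3 := dotvv_ge0 ((x - y) - (cpf x - cpf y)).
move: h1 h2 h3; move: (cpf x) (cpf y) => a b.
rewrite !(dotvDl, dotvDr, dotvBl, dotvBr, dotvNl, dotvNr, opprK).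
rewrite ?(dotvC y x) ?(dotvC a x) ?(dotvC b x) ?(dotvC a y) ?(dotvC b y) ?(dotvC b a).
lra.
Qed.

Lemma sq_le (a e D del : R) : 0 <= a -> 0 < e -> 0 <= D -> del = e / (D + 1) ->
  a ^+ 2 <= D * del ^+ 2 -> a <= e.
Proof.
move=> a0 e0 D0 -> H.
have D1 : 0 < D + 1 by lra.
have E : e / (D + 1) * (D + 1) = e by rewrite mulfVK // gt_eqF.
set q := e / (D + 1) in H E.
have q0 : 0 <= q by rewrite /q divr_ge0 // ltW.
rewrite !expr2 in H.
nra.
Qed.

Lemma cpf_cont eta : {for eta, continuous cpf}.
Proof.

apply/(@cvgrPdist_le _ _ _ (nbhs eta) (nbhs_filter eta)) => e e0.
have D0 : 0 <= d%:R :> R by [].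
have del0 : 0 < e / (d%:R + 1) by rewrite divr_gt0 // ltr_wpDl.
near=> x.
have : ball eta (e / (d%:R + 1)) x by near: x; exact: nbhsx_ballx.
rewrite -ball_normE /= => Hx.
apply: (@sq_le _ e d%:R (e / (d%:R + 1))) => //.
apply: le_trans (norm_le_dotv _) _.
apply: le_trans (cpf_nonexp _ _) _.
apply: le_trans (dotv_le_norm _) _.
apply: ler_wpM2l => //; apply: lerXn2r; rewrite ?nnegrE //; first exact: ltW.

Unshelve. all: by end_near.
Qed.
End CP.
Lemma arith1 (R : realType) (W G lam N f X tt dd dts : R) :
  1 <= N -> 0 <= W -> 0 <= X ->
  - W + N ^+ 2 / 2 * tt + N ^+ 2 * dts <= f ->
  f <= N * (lam * N) * G - 4^-1 * X + N ^+ 2 / 2 * tt + N ^+ 2 * dd + N ^+ 2 * dts ->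
  [/\ X / N ^+ 2 <= 4 * (W / N + lam * G + dd),
      - (W / N) + dts <= f / N ^+ 2 - 2^-1 * tt &
      f / N ^+ 2 - 2^-1 * tt <= lam * G + dd + dts].
Proof.
move=> N1 W0 X0 hL hU.
have N0 : 0 < N by lra.
have P0 : 0 < N ^+ 2 by rewrite exprn_gt0.
have WN : W / N ^+ 2 <= W / N.
  rewrite expr2 invfM mulrA; apply: ler_piMr; first by rewrite divr_ge0 // ltW.
  by rewrite invf_le1.
set f' := f / N ^+ 2; set X' := X / N ^+ 2; set W' := W / N ^+ 2.
have Ef : f = f' * N ^+ 2 by rewrite /f' divfK ?gt_eqF.
have EX : X = X' * N ^+ 2 by rewrite /X' divfK ?gt_eqF.
have EW : W = W' * N ^+ 2 by rewrite /W' divfK ?gt_eqF.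
rewrite Ef EX EW in hL hU.
have EN : N * (lam * N) = lam * N ^+ 2 by rewrite expr2; ring.
rewrite EN in hU.
have h1 : (- W' + 2^-1 * tt + dts) * N ^+ 2 <= f' * N ^+ 2.
  have -> : (- W' + 2^-1 * tt + dts) * N ^+ 2 = - (W' * N ^+ 2) + N ^+ 2 / 2 * tt + N ^+ 2 * dts by ring.
  exact: hL.
have h2 : (f' + 4^-1 * X') * N ^+ 2 <= (lam * G + 2^-1 * tt + dd + dts) * N ^+ 2.
  have -> : (f' + 4^-1 * X') * N ^+ 2 = f' * N ^+ 2 + 4^-1 * (X' * N ^+ 2) by ring.
  have -> : (lam * G + 2^-1 * tt + dd + dts) * N ^+ 2 =
    lam * N ^+ 2 * G + N ^+ 2 / 2 * tt + N ^+ 2 * dd + N ^+ 2 * dts by ring.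
  lra.
rewrite ler_pM2r // in h1; rewrite ler_pM2r // in h2.
have X'0 : 0 <= X' by rewrite /X' divr_ge0 // ltW.
have WN' : W' <= W / N by exact: WN.
split; lra.
Qed.

Section Key.
Variables (R : realType) (d K : nat) (alpha : 'I_K -> 'rV[R]_d).

Lemma key_bounds (omega : 'I_K -> R) eta etan th (n : nat) (lam : R) :
  (forall k, 0 < omega k) -> (1 <= n)%N -> 0 <= lam ->
  (forall k, 6 * gtil (cpp alpha eta).1 (cpp alpha eta).2 k <= omega k * lam ^+ 2 * n%:R) ->
  (forall th', fobj alpha omega etan th' <= fobj alpha omega etan th) ->
  let N := n%:R in let ts := cpf alpha eta in
  let del := N^-1 *: etan - eta in
  let W := \sum_k omega k in let G := \sum_k gtil (cpp alpha eta).1 (cpp alpha eta).2 k in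
  let f := fobj alpha omega etan th in
  [/\ dotv (N^-1 *: th - ts) (N^-1 *: th - ts) <= 4 * (W / N + lam * G + dotv del del),
      - (W / N) + dotv del ts <= f / N ^+ 2 - 2^-1 * dotv ts ts &
      f / N ^+ 2 - 2^-1 * dotv ts ts <= lam * G + dotv del del + dotv del ts].
Proof.
move=> om0 n1 lam0 HM Hmax N ts del W G f.
have A := cpp_adm alpha eta.
have N1 : 1 <= N by rewrite /N ler1n.
have N0 : 0 < N by lra.
set e := N^-1 *: etan.
have Ee : etan = N *: e by rewrite /e scalerA mulfV ?gt_eqF // scale1r.
have hL := fobj_lower e A (fun k => ltW (om0 k)) (ltW N0).
have hU := @fobj_upper R d K alpha omega eta _ _ N (lam * N) e th A om0 (ltW N0)
   (mulr_ge0 lam0 (ltW N0)).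
have HM' : forall k, 6 * (N * gtil (cpp alpha eta).1 (cpp alpha eta).2 k) <= omega k * (lam * N) ^+ 2.
  move=> k; have := ler_wpM2l (ltW N0) (HM k); rewrite !expr2; lra.
have {}hU := hU HM'.
have hm := Hmax (N *: thof alpha eta (cpp alpha eta).1 (cpp alpha eta).2).
rewrite Ee in hm Hmax; rewrite /f Ee.
have X0 := dotvv_ge0 (th - N *: ts).
have W0 : 0 <= W by apply: sumr_ge0 => k _; exact: ltW.
have [a1 a2 a3] := arith1 N1 W0 X0 (le_trans hL hm) hU.
split => //.
have -> : N^-1 *: th - ts = N^-1 *: (th - N *: ts).
  by rewrite scalerBr scalerA mulVf ?gt_eqF // scale1r.
by rewrite dotvZl dotvZr mulrA -invfM -expr2 mulrC.
Qed.
End Key.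

Unset Implicit Arguments.
Local Open Scope classical_set_scope.
Local Open Scope ring_scope.

Lemma near_cond (R : realType) (K : nat) (omega gt : 'I_K -> R) (lam C : R) :
  (forall k, 0 < omega k) -> (forall k, 0 <= gt k) -> 0 < lam ->
  \forall n \near \oo, [/\ (1 <= n)%N, C <= n%:R &
     forall k, 6 * gt k <= omega k * lam ^+ 2 * n%:R].
Proof.
move=> om0 gt0 lam0.
set B := \sum_k 6 * gt k / (omega k * lam ^+ 2).
have B0 k : 6 * gt k / (omega k * lam ^+ 2) <= B.
  rewrite /B (bigD1 k) //= lerDl; apply: sumr_ge0 => i _.
  by rewrite divr_ge0 ?mulr_ge0 // ltW // mulr_gt0 // exprn_gt0.
have Bp : 0 <= B by apply: sumr_ge0 => i _; rewrite divr_ge0 ?mulr_ge0 // ltW // mulr_gt0 // exprn_gt0.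
apply: filterS (nbhs_infty_ger (1 + `|C| + B)) => n hn; split.
- have : (1 : R) <= n%:R by have := normr_ge0 C; lra.
  by rewrite ler1n.
- by have := ler_norm C; lra.
- move=> k; have h := B0 k.
  have h2 : 6 * gt k / (omega k * lam ^+ 2) <= n%:R by have := normr_ge0 C; lra.
  rewrite ler_pdivrMr ?mulr_gt0 ?exprn_gt0 // in h2.
  move: h2; rewrite [n%:R * _]mulrC; exact.
Qed.

Lemma sq_le2 (R : realType) (a e : R) : 0 <= a -> 0 < e -> a ^+ 2 <= e ^+ 2 -> a <= e.
Proof. move=> a0 e0; rewrite !expr2 => H; nra. Qed.

Lemma dbound (R : realType) (D x c : R) : 0 <= D -> 0 <= x -> 0 < c ->
  x <= c / (D + 1) -> D * x <= c.
Proof.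
move=> D0 x0 c0; rewrite ler_pdivlMr; last lra.
move=> h; nra.
Qed.

Lemma lamG (R : realType) (G c : R) : 0 <= G -> 0 <= c -> c / (G + 1) * G <= c.
Proof.
move=> G0 c0; rewrite mulrAC ler_pdivrMr; last lra.
nra.
Qed.

Lemma rho_sq (R : realType) (D e : R) : 0 <= D -> 0 <= e ->
  (e / (4 * (D + 1))) ^+ 2 <= (e ^+ 2 / 16) / (D + 1).
Proof.
move=> D0 e0.
have q1 : 1 <= D + 1 by lra.
have -> : (e / (4 * (D + 1))) ^+ 2 = (e ^+ 2 / 16) / (D + 1) * (D + 1)^-1.
  by field; rewrite gt_eqF //; lra.
apply: ler_piMr; first by rewrite !divr_ge0 ?exprn_ge0 //; lra.
by rewrite invf_le1 //; lra.
Qed.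

Lemma dd_bound (R : realType) (d : nat) (del : 'rV[R]_d) (e : R) : 0 < e ->
  `|del| <= e / (4 * (d%:R + 1)) -> dotv del del <= e ^+ 2 / 16.
Proof.
move=> e0 h.
have D0 : 0 <= d%:R :> R by [].
apply: le_trans (dotv_le_norm _) _.
apply: dbound => //; first by rewrite divr_gt0 // exprn_gt0.
apply: le_trans _ (@rho_sq _ _ _ D0 (ltW e0)).
by apply: lerXn2r; rewrite ?nnegrE // (le_trans _ h).
Qed.

Theorem proposition4 (R : realType) (d K : nat) (alpha : 'I_K -> 'rV[R]_d)
    (alpha_neq0 : forall k, alpha k != 0) :
  exists cp : 'rV[R]_d -> 'rV[R]_d,
    (forall eta : 'rV[R]_d, eta != 0 -> exists S : {set 'I_K}, admissible alpha eta S)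
    /\ (forall (eta : 'rV[R]_d) (S : {set 'I_K}), eta != 0 ->
          admissible alpha eta S -> perpproj alpha S eta = cp eta)
    /\ (forall eta : 'rV[R]_d, eta != 0 -> {for eta, continuous cp})
    /\ (forall (omega : 'I_K -> R) (etan : nat -> 'rV[R]_d) (eta : 'rV[R]_d)
               (theta : nat -> 'rV[R]_d),
          (forall k, 0 < omega k) ->
          eta != 0 ->
          (fun n => n%:R^-1 *: etan n) @ \oo --> eta ->
          (forall n (th : 'rV[R]_d),
              fobj alpha omega (etan n) th <= fobj alpha omega (etan n) (theta n)) ->
          ((fun n => n%:R^-1 *: theta n) @ \oo --> cp eta)
          /\ ((fun n => fobj alpha omega (etan n) (theta n) / (n%:R ^+ 2))
                @ \oo --> 2^-1 * dotv (cp eta) (cp eta))).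
Proof.
exists (cpf alpha); split; [|split; [|split]].
- by move=> eta _; exists (cpp alpha eta).1; apply: adm2_admissible (cpp_adm alpha eta).
- by move=> eta S _ HS; apply: cpf_uniq.
- by move=> eta _; apply: cpf_cont.
move=> omega etan eta theta om0 _ Hc Hmax.
have A := cpp_adm alpha eta; have [_ g0 _ _] := A.
set ts := cpf alpha eta.
set gt := gtil (cpp alpha eta).1 (cpp alpha eta).2.
have gt0 k : 0 <= gt k by rewrite /gt /gtil; case: ifP => // /g0.
set W := \sum_k omega k; set G := \sum_k gt k.
have W0 : 0 <= W by apply: sumr_ge0 => k _; exact: ltW.
have G0 : 0 <= G by apply: sumr_ge0 => k _; exact: gt0.
have D0 : 0 <= d%:R :> R by [].
split.
- apply/cvgrPdist_le => ep ep0.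
  set c := ep ^+ 2 / 12.
  have c0 : 0 < c by rewrite /c divr_gt0 // exprn_gt0.
  have lam0 : 0 < c / (G + 1) by rewrite divr_gt0 //; lra.
  have F1 := @near_cond R K omega gt _ (24 * W / ep ^+ 2) om0 gt0 lam0.
  have rho0 : 0 < ep / (4 * (d%:R + 1)) by rewrite divr_gt0 //; lra.
  have F2 := Hc; move/cvgrPdist_le : F2 => /(_ _ rho0) F2.
  near=> n.
  have [n1 hC hk] : [/\ (1 <= n)%N, 24 * W / ep ^+ 2 <= n%:R &
     forall k, 6 * gt k <= omega k * (c / (G + 1)) ^+ 2 * n%:R] by near: n; exact: F1.
  have hd : `|eta - n%:R^-1 *: etan n| <= ep / (4 * (d%:R + 1)) by near: n; exact: F2.
  have [b1 _ _] := key_bounds om0 n1 (ltW lam0) hk (Hmax n).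
  have N0 : 0 < n%:R :> R by rewrite ltr0n.
  have hW : W / n%:R <= ep ^+ 2 / 24.
    rewrite ler_pdivrMr // in hC; last by rewrite exprn_gt0.
    rewrite ler_pdivrMr //; lra.
  have hL := @lamG R G c G0 (ltW c0).
  have hD : dotv (n%:R^-1 *: etan n - eta) (n%:R^-1 *: etan n - eta) <= ep ^+ 2 / 16.
    by apply: dd_bound => //; rewrite distrC.
  rewrite distrC; apply: sq_le2 => //.
  apply: le_trans (norm_le_dotv _) _; apply: le_trans b1 _.
  rewrite /c in hL; rewrite -/W -/gt -/G /c.
  have E0 : 0 <= ep ^+ 2 by rewrite exprn_ge0 // ltW.
  move: hW hL hD E0; set A1 := W / _; set B1 := _ * G; set C1 := dotv _ _; set E1 := ep ^+ 2.
  clearbody A1 B1 C1 E1; lra.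
- apply/cvgrPdist_le => ep ep0.
  set c := ep / 4.
  have c0 : 0 < c by rewrite /c divr_gt0.
  have lam0 : 0 < c / (G + 1) by rewrite divr_gt0 //; lra.
  have F1 := @near_cond R K omega gt _ (4 * W / ep) om0 gt0 lam0.
  set e1 := ep / (ep + 1).
  have e10 : 0 < e1 by rewrite /e1 divr_gt0 //; lra.
  have e1ep : e1 <= ep.
    by rewrite /e1 ler_pdivrMr; [nra | lra].
  have e11 : e1 <= 1.
    by rewrite /e1 ler_pdivrMr; lra.
  have rho1 : 0 < e1 / (4 * (d%:R + 1)) by rewrite divr_gt0 //; lra.
  have Q0 : 0 < (d%:R + 1) * (`|ts| + 1) by apply: mulr_gt0; have := normr_ge0 ts; lra.
  have rho2 : 0 < c / ((d%:R + 1) * (`|ts| + 1)) by rewrite divr_gt0.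
  have F2 := Hc; move/cvgrPdist_le : F2 => /(_ _ rho1) F2.
  have F3 := Hc; move/cvgrPdist_le : F3 => /(_ _ rho2) F3.
  near=> n.
  have [n1 hC hk] : [/\ (1 <= n)%N, 4 * W / ep <= n%:R &
     forall k, 6 * gt k <= omega k * (c / (G + 1)) ^+ 2 * n%:R] by near: n; exact: F1.
  have hd1 : `|eta - n%:R^-1 *: etan n| <= e1 / (4 * (d%:R + 1)) by near: n; exact: F2.
  have hd2 : `|eta - n%:R^-1 *: etan n| <= c / ((d%:R + 1) * (`|ts| + 1)) by near: n; exact: F3.
  have [_ b2 b3] := key_bounds om0 n1 (ltW lam0) hk (Hmax n).
  have N0 : 0 < n%:R :> R by rewrite ltr0n.
  have hW : W / n%:R <= c.
    rewrite ler_pdivrMr // in hC.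
    rewrite ler_pdivrMr // /c; lra.
  have hL := @lamG R G c G0 (ltW c0).
  set del := n%:R^-1 *: etan n - eta.
  have hD : dotv del del <= c.
    apply: le_trans (@dd_bound _ _ del e1 e10 _) _; first by rewrite /del distrC.
    rewrite /c; have : e1 ^+ 2 <= ep by rewrite expr2; nra.
    lra.
  have hT : `|dotv del ts| <= c.
    apply: le_trans (dotv_abs _ _) _.
    rewrite distrC -/del in hd2.
    rewrite ler_pdivlMr // in hd2.
    have := normr_ge0 ts; have := normr_ge0 del; nra.
  have := lexx `|dotv del ts|; rewrite ler_norml => /andP [t1 t2].
  rewrite distrC ler_norml; apply/andP; split.
  + move: b2; rewrite -/W -/gt -/G -/del -/ts.
    have Ec : 4 * c = ep by rewrite /c mulrC divfK // (eqr_nat R 4 0).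
    clearbody c; lra.
  + move: b3; rewrite -/W -/gt -/G -/del -/ts.
    have Ec : 4 * c = ep by rewrite /c mulrC divfK // (eqr_nat R 4 0).
    clearbody c; lra.
Unshelve. all: by end_near.
Qed.
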